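(* Let $\kappa$ be a fixed grounding calculus. If a grounding tree $\Gamma[\Delta]\blacktriangleright A$ corresponds to a legitimate grounding derivation in $\kappa$, then $\Gamma[\Delta]\blacktriangleright A$ is derivable from the hypotheses $\Gamma,\Delta$ in any calculus that contains the rules of $\kappa$, the rules for the immediate grounding operator $\blacktriangleright$, and the rules for the grounding tree operator $\triangleright$.
   Context: A grounding calculus $\kappa$ is a natural-deduction system whose grounding rules have the form: from premisses $A_1,\dots,A_n$ (the ground) and a possibly empty list of premisses $[C_1,\dots,C_m]$ (the conditions) infer $B$. A grounding derivation is a derivation constructed by exclusively applying grounding rules of $\kappa$ to a set of consistent hypotheses and containing at least one rule application. Language: formulae are built from propositional variables with $\bot,\neg,\wedge,\vee,\to$, and immediate grounding formulae $\Gamma[\Delta]\blacktriangleright A$, where $\Gamma,\Delta$ are finite lists ($\Delta$ possibly empty) whose elements are either formulae or expressions $(\Theta[\Sigma])\triangleright B$, where $B$ is a formula and $\Theta,\Sigma$ are again such lists (so $\triangleright$ can be nested arbitrarily); an expression $(\Theta[\Sigma])\triangleright B$ is not itself a formula. A grounding tree is a formula $\Gamma[\Delta]\blacktriangleright A$; when no element of $\Gamma,\Delta$ has the form $(\cdot)\triangleright\cdot$ it is an immediate grounding claim. Rules for $\blacktriangleright$: Introduction: immediately below an application of a grounding rule of $\kappa$ with premisses $A_1,\dots,A_n,[C_1,\dots,C_m]$ and conclusion $B$, infer $A_1,\dots,A_n[C_1,\dots,C_m]\blacktriangleright B$. Eliminations: from $\Gamma[\Delta]\blacktriangleright B$ infer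 $B$, and infer any element of $\Gamma$ or of $\Delta$ whose outermost operator is not $\triangleright$; from $A_1,\dots,A_n[C_1,\dots,C_m]\blacktriangleright B$ infer $\bot$ whenever there is no grounding rule application with those premisses and conclusion. Rules for $\triangleright$: Introductions: from $\Delta[\Theta]\blacktriangleright A$ and $\Gamma_1,A,\Gamma_2[\Xi]\blacktriangleright B$ infer $\Gamma_1,(\Delta[\Theta])\triangleright A,\Gamma_2[\Xi]\blacktriangleright B$; from $\Delta[\Theta]\blacktriangleright C$ and $\Gamma[\Xi_1,C,\Xi_2]\blacktriangleright B$ infer $\Gamma[\Xi_1,(\Delta[\Theta])\triangleright C,\Xi_2]\blacktriangleright B$. Eliminations: from $\Gamma_1,(\Delta[\Theta])\triangleright A,\Gamma_2[\Xi]\blacktriangleright B$ infer $\Delta[\Theta]\blacktriangleright A$ and $\Gamma_1,A,\Gamma_2[\Xi]\blacktriangleright B$; from $\Gamma[\Xi_1,(\Delta[\Theta])\triangleright C,\Xi_2]\blacktriangleright B$ infer $\Delta[\Theta]\blacktriangleright C$ and $\Gamma[\Xi_1,C,\Xi_2]\blacktriangleright B$. Correspondence: a grounding tree $G_1,\dots,G_m[G_{m+1},\dots,G_n]\blacktriangleright A$ (or an expression $(G_1,\dots,G_m[G_{m+1},\dots,G_n])\triangleright A$) corresponds to a grounding derivation $\delta$ iff the root of $\delta$ is $A$, the last rule application $r$ of $\delta$ has $n$ premisses, the first $m$ of which are grounds and the rest conditions, and for each $i$: if $G_i$ does not have the form $(\cdot)\triangleright\cdot$ then the $i$-th premiss of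 $r$ is $G_i$, and if $G_i$ has the form $(\cdot)\triangleright\cdot$ then the grounding derivation of the $i$-th premiss of $r$ corresponds to $G_i$. *)

(* Defs.v *)
From Stdlib Require Import List.
Import ListNotations.
Set Implicit Arguments.

Inductive form : Type :=
| Var : nat -> form
| Bot : form
| Neg : form -> form
| And : form -> form -> form
| Or  : form -> form -> form
| Imp : form -> form -> form
(* Gnd G D A  is  G[D] ▶ A *)
| Gnd : list elem -> list elem -> form -> form
with elem : Type :=
| EF : form -> elem
| ET : list elem -> list elem -> form -> elem. (* (Θ[Σ]) ▷ B, not a formula *)

(* A grounding calculus κ is given by its set of grounding-rule applications:
   kappa grounds conditions conclusion. *)
Definition gcalculus := list form -> list form -> form -> Prop.

Inductive gder : Type :=
| Hyp : form -> gder
| App : list gder -> list gder -> form -> gder. (* grounds, conditions, conclusion *)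

Definition root (d : gder) : form :=
  match d with Hyp A => A | App _ _ B => B end.

Inductive valid (kappa : gcalculus) : gder -> Prop :=
| valid_hyp : forall A, valid kappa (Hyp A)
| valid_app : forall ds es B,
    Forall (valid kappa) ds -> Forall (valid kappa) es ->
    kappa (map root ds) (map root es) B ->
    valid kappa (App ds es B).

Fixpoint hyps (d : gder) : list form :=
  match d with
  | Hyp A => [A]
  | App ds es _ =>
      let fix hl (l : list gder) : list form :=
         match l with [] => [] | x :: r => hyps x ++ hl r end in
      hl ds ++ hl es
  end.

(** Classical consistency of a set of formulae: satisfiable by a valuation
    (atoms and ▶-formulae receive arbitrary truth values). *)
Fixpoint eval (v : nat -> bool) (g : list elem -> list elem -> form -> bool)
  (A : form) : bool :=
  match A with
  | Var n => v n
  | Bot => false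
  | Neg B => negb (eval v g B)
  | And B C => andb (eval v g B) (eval v g C)
  | Or B C => orb (eval v g B) (eval v g C)
  | Imp B C => orb (negb (eval v g B)) (eval v g C)
  | Gnd G D B => g G D B
  end.

Definition consistent (H : list form) : Prop :=
  exists v g, forall A, In A H -> eval v g A = true.

Definition grounding_derivation (kappa : gcalculus) (d : gder) : Prop :=
  valid kappa d /\ consistent (hyps d) /\ exists ds es B, d = App ds es B.

Inductive corresponds : list elem -> list elem -> form -> gder -> Prop :=
| corr_app : forall G D A ds es,
    Forall2 ecorr G ds -> Forall2 ecorr D es ->
    corresponds G D A (App ds es A)
with ecorr : elem -> gder -> Prop :=
| ecorr_form : forall C d, root d = C -> ecorr (EF C) d
| ecorr_tree : forall G D B d, corresponds G D B d -> ecorr (ET G D B) d.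

(** Hypotheses Γ,Δ of a grounding tree: its formula elements, recursively
    through nested ▷-expressions. *)
Fixpoint leaves_e (e : elem) : list form :=
  match e with
  | EF C => [C]
  | ET G D _ =>
      let fix ll (l : list elem) : list form :=
         match l with [] => [] | x :: r => leaves_e x ++ ll r end in
      ll G ++ ll D
  end.

Definition tree_hyps (G D : list elem) : list form :=
  leaves_e (ET G D Bot).

(* Extra : list of premisses -> conclusion, any additional (non-discharging)
   rules of a calculus extending the three groups of rules. *)
Inductive derivable (kappa : gcalculus) (Extra : list form -> form -> Prop)
  (Hs : form -> Prop) : form -> Prop :=
| d_hyp : forall A, Hs A -> derivable kappa Extra Hs A
| d_kappa : forall As Cs B,
    Forall (derivable kappa Extra Hs) As -> Forall (derivable kappa Extra Hs) Cs ->
    kappa As Cs B -> derivable kappa Extra Hs B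
| d_extra : forall Ps B,
    Forall (derivable kappa Extra Hs) Ps -> Extra Ps B -> derivable kappa Extra Hs B
| d_gnd_I : forall As Cs B,
    Forall (derivable kappa Extra Hs) As -> Forall (derivable kappa Extra Hs) Cs ->
    kappa As Cs B ->
    derivable kappa Extra Hs (Gnd (map EF As) (map EF Cs) B)
| d_gnd_E_concl : forall G D B,
    derivable kappa Extra Hs (Gnd G D B) -> derivable kappa Extra Hs B
| d_gnd_E_elem : forall G D B C,
    derivable kappa Extra Hs (Gnd G D B) -> In (EF C) (G ++ D) ->
    derivable kappa Extra Hs C
| d_gnd_E_bot : forall As Cs B,
    derivable kappa Extra Hs (Gnd (map EF As) (map EF Cs) B) ->
    ~ kappa As Cs B -> derivable kappa Extra Hs Bot
| d_tri_I_ground : forall D T A G1 G2 X B,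
    derivable kappa Extra Hs (Gnd D T A) ->
    derivable kappa Extra Hs (Gnd (G1 ++ EF A :: G2) X B) ->
    derivable kappa Extra Hs (Gnd (G1 ++ ET D T A :: G2) X B)
| d_tri_I_cond : forall D T C G X1 X2 B,
    derivable kappa Extra Hs (Gnd D T C) ->
    derivable kappa Extra Hs (Gnd G (X1 ++ EF C :: X2) B) ->
    derivable kappa Extra Hs (Gnd G (X1 ++ ET D T C :: X2) B)
| d_tri_E_ground1 : forall D T A G1 G2 X B,
    derivable kappa Extra Hs (Gnd (G1 ++ ET D T A :: G2) X B) ->
    derivable kappa Extra Hs (Gnd D T A)
| d_tri_E_ground2 : forall D T A G1 G2 X B,
    derivable kappa Extra Hs (Gnd (G1 ++ ET D T A :: G2) X B) ->
    derivable kappa Extra Hs (Gnd (G1 ++ EF A :: G2) X B)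
| d_tri_E_cond1 : forall D T C G X1 X2 B,
    derivable kappa Extra Hs (Gnd G (X1 ++ ET D T C :: X2) B) ->
    derivable kappa Extra Hs (Gnd D T C)
| d_tri_E_cond2 : forall D T C G X1 X2 B,
    derivable kappa Extra Hs (Gnd G (X1 ++ ET D T C :: X2) B) ->
    derivable kappa Extra Hs (Gnd G (X1 ++ EF C :: X2) B).

(* Main.v *)
Require Import Defs.
From Stdlib Require Import List.
Import ListNotations.

Fixpoint gder_ind' (P : gder -> Prop) (fh : forall A, P (Hyp A))
  (fa : forall ds es B, Forall P ds -> Forall P es -> P (App ds es B)) (d : gder) : P d :=
  match d with
  | Hyp A => fh A
  | App ds es B =>
      fa ds es B
        ((fix f (l : list gder) : Forall P l :=
            match l with [] => Forall_nil _ | x :: r => Forall_cons _ (gder_ind' P fh fa x) (f r) end) ds)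
        ((fix f (l : list gder) : Forall P l :=
            match l with [] => Forall_nil _ | x :: r => Forall_cons _ (gder_ind' P fh fa x) (f r) end) es)
  end.

Lemma leaves_ET G D B : leaves_e (ET G D B) = flat_map leaves_e G ++ flat_map leaves_e D.
Proof.
  reflexivity.
Qed.

Lemma in_flat e l F : In e l -> In F (leaves_e e) -> In F (flat_map leaves_e l).
Proof. intros. apply in_flat_map. eauto. Qed.

Lemma corr_root G D B d : corresponds G D B d -> root d = B.
Proof. intro H; inversion H; reflexivity. Qed.

Section S.
Variable kappa : gcalculus.
Variable Extra : list form -> form -> Prop.
Variable Hs : form -> Prop.
Notation der := (derivable kappa Extra Hs).

Definition Q (e : elem) (d : gder) : Prop :=
  ecorr e d /\ forall G' D' B', e = ET G' D' B' -> der (Gnd G' D' B').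

Lemma prem G ds : Forall2 Q G ds -> (forall F, In F (flat_map leaves_e G) -> Hs F) ->
  Forall der (map root ds).
Proof.
  induction 1 as [|e d G ds [He Hd] _ IH]; intros Hh; simpl; constructor.
  - inversion He; subst.
    + apply d_hyp. apply Hh. simpl. left. reflexivity.
    + apply corr_root in H. rewrite H.
      eapply d_gnd_E_concl. apply (Hd _ _ _ eq_refl).
  - apply IH. intros F HF. apply Hh. simpl. apply in_or_app. right. exact HF.
Qed.

Lemma repl_g G ds : Forall2 Q G ds -> forall P X B,
  der (Gnd (P ++ map EF (map root ds)) X B) -> der (Gnd (P ++ G) X B).
Proof.
  induction 1 as [|e d G ds [He Hd] _ IH]; intros P X B H; simpl in *; auto.
  inversion He; subst.
  - specialize (IH (P ++ [EF (root d)]) X B). rewrite <- !app_assoc in IH. simpl in IH. auto.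
  - apply corr_root in H0 as Hr.
    apply d_tri_I_ground. apply (Hd _ _ _ eq_refl).
    specialize (IH (P ++ [EF B0]) X B). rewrite <- !app_assoc in IH. simpl in IH.
    apply IH. rewrite <- Hr. exact H.
Qed.

Lemma repl_c D es : Forall2 Q D es -> forall G P B,
  der (Gnd G (P ++ map EF (map root es)) B) -> der (Gnd G (P ++ D) B).
Proof.
  induction 1 as [|e d D es [He Hd] _ IH]; intros G P B H; simpl in *; auto.
  inversion He; subst.
  - specialize (IH G (P ++ [EF (root d)]) B). rewrite <- !app_assoc in IH. simpl in IH. auto.
  - apply corr_root in H0 as Hr.
    apply d_tri_I_cond. apply (Hd _ _ _ eq_refl).
    specialize (IH G (P ++ [EF B0]) B). rewrite <- !app_assoc in IH. simpl in IH.
    apply IH. rewrite <- Hr. exact H.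
Qed.
End S.

Definition PP (kappa : gcalculus) (d : gder) : Prop :=
  forall G D A, corresponds G D A d -> valid kappa d ->
  forall Extra Hs, (forall F, In F (tree_hyps G D) -> Hs F) ->
  derivable kappa Extra Hs (Gnd G D A).

Lemma mkQ kappa Extra Hs G ds : Forall2 ecorr G ds -> Forall (PP kappa) ds ->
  Forall (valid kappa) ds -> (forall F, In F (flat_map leaves_e G) -> Hs F) ->
  Forall2 (Q kappa Extra Hs) G ds.
Proof.
  induction 1 as [|e d G ds He _ IH]; intros Hp Hv Hh; constructor.
  - split; auto. intros G' D' B' ->. inversion Hp; inversion Hv; subst.
    inversion He; subst. apply H1; auto.
    intros F HF. apply Hh. unfold tree_hyps in HF. rewrite leaves_ET in HF.
    apply (in_flat (ET G' D' B')). left; reflexivity. rewrite leaves_ET. exact HF.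
  - inversion Hp; inversion Hv; subst. apply IH; auto.
    intros F HF. apply Hh. simpl. apply in_or_app. right. exact HF.
Qed.

Lemma main kappa d : PP kappa d.
Proof.
  induction d as [A|ds es B IHd IHe] using gder_ind'.
  - intros G D A' H. inversion H.
  - intros G D A H Hv Extra Hs Hh. inversion H; subst. inversion Hv; subst.
    unfold tree_hyps in Hh. rewrite leaves_ET in Hh.
    assert (HG : Forall2 (Q kappa Extra Hs) G ds).
    { apply mkQ; auto. intros; apply Hh, in_or_app; auto. }
    assert (HD : Forall2 (Q kappa Extra Hs) D es).
    { apply mkQ; auto. intros; apply Hh, in_or_app; auto. }
    apply (@repl_g _ _ _ _ _ HG nil). apply (@repl_c _ _ _ _ _ HD _ nil). simpl.
    apply d_gnd_I; auto.
    + eapply prem; eauto. intros; apply Hh, in_or_app; auto.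
    + eapply prem; eauto. intros; apply Hh, in_or_app; auto.
Qed.

Theorem mainTheorem2 (kappa : gcalculus) (G D : list elem) (A : form) (d : gder) :
  grounding_derivation kappa d ->
  corresponds G D A d ->
  forall Extra : list form -> form -> Prop,
    derivable kappa Extra (fun F => In F (tree_hyps G D)) (Gnd G D A).
Proof.
  intros [Hv _] Hc Extra. eapply main; eauto.
Qed.
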